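(* For every real number $L>0$, $$\mathcal L\left(e^{-L}\right)=\sum_{k=2}^{\infty}\mathcal L\left(\frac{\sinh^2(L/2)}{\sinh^2(kL/2)}\right).$$
   Context: $\mathcal L$ denotes the Rogers dilogarithm: for real $z\le 1$, $\mathcal L(z)=\mathrm{Li}_2(z)+\tfrac12\log|z|\log(1-z)$ (with $\mathcal L(0)=0$, $\mathcal L(1)=\pi^2/6$), where $\mathrm{Li}_2(z)=\sum_{m\ge1}z^m/m^2=-\int_0^z\frac{\log(1-t)}{t}\,dt$. *)

(* Defs.v *)
From Stdlib Require Import Reals Lra ClassicalEpsilon.
Open Scope R_scope.

(* The series
   converges for |z| <= 1, which covers every argument used in theorem1
   (all lie in (0,1)).  The limit is selected by the (classical) epsilon
   operator; since limits are unique, for |z| <= 1 this is exactly Li2 z. *)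
Definition Li2_partial (z : R) (n : nat) : R :=
  sum_f_R0 (fun m => z ^ (S m) / (INR (S m))^2) n.

Definition Li2 (z : R) : R :=
  epsilon (inhabits 0) (fun l => Un_cv (Li2_partial z) l).

Definition Rogers (z : R) : R :=
  if Req_EM_T z 0 then 0
  else if Req_EM_T z 1 then PI ^ 2 / 6
  else Li2 z + / 2 * ln (Rabs z) * ln (1 - z).

(* Main.v *)
Require Import Defs.
From Stdlib Require Import Reals Lra Psatz ClassicalEpsilon.
From Coquelicot Require Import Coquelicot.
Open Scope R_scope.

Definition bb (n : nat) : R := / (INR (S n)) ^ 2.
Definition aa : nat -> R := @PS_incr_1 R_AbsRing R_NormedModule bb.
Definition cc (n : nat) : R := / INR (S n).
Definition dd : nat -> R := @PS_incr_1 R_AbsRing R_NormedModule cc.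

Lemma rad1 (a : nat -> R) : (forall n, Rabs (a n) <= 1) ->
  forall x, Rabs x < 1 -> Rbar_lt (Rabs x) (CV_radius a).
Proof.
  intros Ha x Hx.
  destruct (CV_radius_bounded a) as [Hub _].
  assert (H1 : Rbar_le 1 (CV_radius a)).
  { apply Hub. exists 1. intro n. rewrite pow1, Rmult_1_r. apply Ha. }
  destruct (CV_radius a) as [r| |]; simpl in *; lra.
Qed.

Lemma INRS_pos n : 0 < INR (S n).
Proof. apply lt_0_INR; lia. Qed.

Lemma INRS_ge1 n : 1 <= INR (S n).
Proof. rewrite S_INR; pose proof (pos_INR n); lra. Qed.

Lemma bb_bound n : Rabs (bb n) <= 1.
Proof.
  unfold bb. pose proof (INRS_ge1 n).
  rewrite Rabs_right.
  - rewrite <- Rinv_1. apply Rinv_le_contravar; nra.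
  - left; apply Rinv_0_lt_compat; nra.
Qed.

Lemma cc_bound n : Rabs (cc n) <= 1.
Proof.
  unfold cc. pose proof (INRS_ge1 n).
  rewrite Rabs_right.
  - rewrite <- Rinv_1. apply Rinv_le_contravar; nra.
  - left; apply Rinv_0_lt_compat; nra.
Qed.

Lemma incr_bound (b : nat -> R) : (forall n, Rabs (b n) <= 1) ->
  forall n, Rabs (@PS_incr_1 R_AbsRing R_NormedModule b n) <= 1.
Proof.
  intros Hb [|n]; simpl.
  - change (Rabs 0 <= 1). rewrite Rabs_R0; lra.
  - apply Hb.
Qed.

Lemma aa_rad x : Rabs x < 1 -> Rbar_lt (Rabs x) (CV_radius aa).
Proof. apply rad1, incr_bound, bb_bound. Qed.
Lemma dd_rad x : Rabs x < 1 -> Rbar_lt (Rabs x) (CV_radius dd).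
Proof. apply rad1, incr_bound, cc_bound. Qed.
Lemma cc_rad x : Rabs x < 1 -> Rbar_lt (Rabs x) (CV_radius cc).
Proof. apply rad1, cc_bound. Qed.

Lemma Li2_eq z : Rabs z < 1 -> Li2 z = PSeries aa z.
Proof.
  intros Hz.
  assert (Hs : is_series (fun k => aa k * z ^ k) (PSeries aa z)).
  { apply is_pseries_R, PSeries_correct, CV_radius_inside, aa_rad, Hz. }
  assert (Hs2 : is_series (fun k => aa (S k) * z ^ (S k)) (PSeries aa z)).
  { apply (is_series_incr_1 (fun k => aa k * z ^ k)).
    match goal with |- is_series _ ?l => replace l with (PSeries aa z) end.
    2:{    assert (E: aa 0%nat = 0) by reflexivity. rewrite E. simpl. rewrite Rmult_0_l. symmetry; apply Rplus_0_r. }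
    exact Hs. }
  apply is_series_Reals in Hs2.
  assert (Hc : Un_cv (Li2_partial z) (PSeries aa z)).
  { intros eps Heps. destruct (Hs2 eps Heps) as [N HN]. exists N.
    intros n Hn. specialize (HN n Hn).
    replace (Li2_partial z n) with (sum_f_R0 (fun k => aa (S k) * z ^ (S k)) n); auto.
    unfold Li2_partial. apply sum_eq. intros i _. simpl aa. unfold bb. 
    unfold Rdiv. ring. }
  unfold Li2.
  apply UL_sequence with (Li2_partial z); auto.
  apply (epsilon_spec (inhabits 0) (fun l => Un_cv (Li2_partial z) l)).
  exists (PSeries aa z); exact Hc.
Qed.

Lemma geom1 t : Rabs t < 1 -> PSeries (fun _ => 1) t = / (1 - t).
Proof.
  intros Ht. unfold PSeries.
  rewrite <- (is_series_unique _ _ (is_series_geom t Ht)).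
  apply Series_ext. intro n. ring.
Qed.

Lemma PSd_dd : forall n, PS_derive dd n = 1.
Proof. intro n. unfold PS_derive. simpl dd. unfold cc. field. apply Rgt_not_eq, INRS_pos. Qed.

Lemma PSd_aa : forall n, PS_derive aa n = cc n.
Proof. intro n. unfold PS_derive. simpl aa. unfold bb, cc. pose proof (INRS_pos n). field. lra. Qed.

Lemma cont_of_derive f x l : is_derive f x l -> continuity_pt f x.
Proof.
  intros H. apply continuity_pt_filterlim. apply (ex_derive_continuous f x). exists l; exact H.
Qed.

Lemma dd_ln x : 0 <= x < 1 -> PSeries dd x = - ln (1 - x).
Proof.
  intros Hx.
  set (f := fun t => PSeries dd t + ln (1 - t)).
  assert (Hd : forall t, -1 < t < 1 -> is_derive f t 0).
  { intros t Ht. unfold f.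
    replace 0 with (PSeries (PS_derive dd) t + (-1) / (1 - t)).
    - apply @is_derive_plus.
      + apply is_derive_PSeries, dd_rad. apply Rabs_def1; lra.
      + auto_derive. lra. field. lra.
    - rewrite (PSeries_ext _ (fun _ => 1)); [|exact PSd_dd].
      rewrite geom1; [field; lra| apply Rabs_def1; lra]. }
  destruct (MVT_gen f 0 x (fun _ => 0)) as [c [_ Hc]].
  - intros t Ht. apply Hd. rewrite Rmin_left in Ht by lra. rewrite Rmax_right in Ht by lra. lra.
  - intros t Ht. rewrite Rmin_left in Ht by lra. rewrite Rmax_right in Ht by lra.
    apply (cont_of_derive _ _ 0). apply Hd. lra.
  - unfold f in Hc. rewrite PSeries_0 in Hc. replace (1 - 0) with 1 in Hc by ring.
    rewrite ln_1 in Hc. simpl in Hc. change (zero : R) with 0 in Hc. lra.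
Qed.

Lemma cc_ln x : 0 < x < 1 -> PSeries cc x = - ln (1 - x) / x.
Proof.
  intros Hx. rewrite <- dd_ln by lra. unfold dd. rewrite PSeries_incr_1. field. lra.
Qed.

Definition Lsm (t : R) : R := PSeries aa t + / 2 * ln t * ln (1 - t).
Definition Ld (t : R) : R := - / 2 * (ln (1 - t) / t + ln t / (1 - t)).

Lemma Lsm_derive t : 0 < t < 1 -> is_derive Lsm t (Ld t).
Proof.
  intros Ht. unfold Lsm.
  replace (Ld t) with (PSeries (PS_derive aa) t + / 2 * (/ t * ln (1 - t) + ln t * (-1 / (1 - t)))).
  - apply @is_derive_plus.
    + apply is_derive_PSeries, aa_rad. apply Rabs_def1; lra.
    + auto_derive. lra. replace (1 + - t) with (1 - t) by ring. field. lra.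
  - rewrite (PSeries_ext _ cc); [|exact PSd_aa]. rewrite cc_ln by lra.
    unfold Ld. field. lra.
Qed.

Lemma Lsm_cont t : 0 < t < 1 -> continuity_pt Lsm t.
Proof. intros Ht. apply (cont_of_derive _ _ (Ld t)), Lsm_derive, Ht. Qed.

Lemma Rogers_Lsm t : 0 < t < 1 -> Rogers t = Lsm t.
Proof.
  intros Ht. unfold Rogers.
  destruct (Req_EM_T t 0); [lra|]. destruct (Req_EM_T t 1); [lra|].
  rewrite Li2_eq by (apply Rabs_def1; lra). rewrite Rabs_right by lra. reflexivity.
Qed.

Lemma lim_eq u (l l' : R) : is_lim_seq u l -> l = l' -> is_lim_seq u l'.
Proof. intros H E; subst; exact H. Qed.

Lemma ln_le_m1 z : 0 < z -> ln z <= z - 1.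
Proof. intros Hz. pose proof (exp_ineq1_le (ln z)). rewrite exp_ln in H by lra. lra. Qed.

Lemma log_bound t : 0 < t <= / 2 -> Rabs (/ 2 * ln t * ln (1 - t)) <= 2 * sqrt t.
Proof.
  intros Ht.
  set (s := sqrt t).
  assert (Hs : 0 < s) by (apply sqrt_lt_R0; lra).
  assert (Hss : s * s = t) by (apply sqrt_sqrt; lra).
  set (A := - ln t). set (B := - ln (1 - t)).
  assert (HA0 : 0 <= A).
  { unfold A. assert (ln t < ln 1) by (apply ln_increasing; lra). rewrite ln_1 in H. lra. }
  assert (HB0 : 0 <= B).
  { unfold B. assert (ln (1 - t) < ln 1) by (apply ln_increasing; lra). rewrite ln_1 in H. lra. }
  assert (HB : B <= 2 * t).
  { unfold B. rewrite <- ln_Rinv by lra.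
    pose proof (ln_le_m1 (/ (1 - t))).
    assert (/ (1 - t) - 1 <= 2 * t).
    { apply (Rmult_le_reg_r (1 - t)); [lra|]. field_simplify; [nra|lra]. }
    assert (0 < / (1 - t)) by (apply Rinv_0_lt_compat; lra). lra. }
  assert (HA : A * s <= 2).
  { assert (E : A = 2 * ln (/ s)).
    { unfold A. rewrite <- Hss. rewrite ln_mult by lra. rewrite ln_Rinv by lra. ring. }
    pose proof (ln_le_m1 (/ s)).
    assert (0 < / s) by (apply Rinv_0_lt_compat; lra).
    assert (/ s * s = 1) by (field; lra).
    rewrite E. nra. }
  replace (/ 2 * ln t * ln (1 - t)) with (/ 2 * A * B) by (unfold A, B; ring).
  rewrite Rabs_right by nra.
  rewrite <- Hss in HB. nra.
Qed.

Lemma Lsm_lim0 u : (forall n, 0 < u n < 1) -> is_lim_seq u 0 -> is_lim_seq (fun n => Lsm (u n)) 0.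
Proof.
  intros Hu Hl. unfold Lsm.
  apply (lim_eq _ (0 + 0)); [|ring].
  apply is_lim_seq_plus'.
  - apply (lim_eq _ (PSeries aa 0)).
    + apply is_lim_seq_continuous; auto.
      apply PSeries_continuity, aa_rad. rewrite Rabs_R0; lra.
    + rewrite PSeries_0. reflexivity.
  - assert (Hsq : is_lim_seq (fun n => 2 * sqrt (u n)) 0).
    { apply (lim_eq _ (2 * sqrt 0)); [|rewrite sqrt_0; ring].
      apply is_lim_seq_mult'; [apply is_lim_seq_const|].
      apply is_lim_seq_continuous; auto. apply continuity_pt_sqrt; lra. }
    apply is_lim_seq_le_le_loc with (u := fun n => - (2 * sqrt (u n))) (w := fun n => 2 * sqrt (u n)).
    + apply is_lim_seq_Reals in Hl. destruct (Hl (/ 2)) as [N HN]; [lra|].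
      exists N. intros n Hn. specialize (HN n Hn). unfold R_dist in HN.
      rewrite Rminus_0_r, Rabs_right in HN by (left; apply Hu).
      pose proof (log_bound (u n)). specialize (Hu n).
      assert (Rabs (/ 2 * ln (u n) * ln (1 - u n)) <= 2 * sqrt (u n)) by (apply H; lra).
      apply Rabs_le_between in H0. lra.
    + apply (lim_eq _ (- 0)); [|ring]. apply (is_lim_seq_opp _ 0). exact Hsq.
    + exact Hsq.
Qed.

Lemma const_on f (a b : R) : (forall t, a < t < b -> is_derive f t 0) ->
  forall x y, a < x < b -> a < y < b -> f x = f y.
Proof.
  intros Hd x y Hx Hy.
  destruct (MVT_gen f x y (fun _ => 0)) as [c [_ Hc]].
  - intros t Ht. apply Hd. split.
    + apply Rlt_le_trans with (Rmin x y); [apply Rmin_glb_lt; lra| lra].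
    + apply Rle_lt_trans with (Rmax x y); [lra| apply Rmax_lub_lt; lra].
  - intros t Ht. apply (cont_of_derive _ _ 0). apply Hd. split.
    + apply Rlt_le_trans with (Rmin x y); [apply Rmin_glb_lt; lra| lra].
    + apply Rle_lt_trans with (Rmax x y); [lra| apply Rmax_lub_lt; lra].
  - lra.
Qed.

Lemma refl x y : 0 < x < 1 -> 0 < y < 1 -> Lsm x + Lsm (1 - x) = Lsm y + Lsm (1 - y).
Proof.
  apply (const_on (fun t => Lsm t + Lsm (1 - t)) 0 1).
  intros t Ht.
  replace 0 with (Ld t + (-1) * Ld (1 - t)).
  - apply @is_derive_plus.
    + apply Lsm_derive, Ht.
    + apply (is_derive_comp Lsm (fun t => 1 - t)).
      * apply Lsm_derive; lra.
      * auto_derive; [auto|ring].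
  - unfold Ld. replace (1 - (1 - t)) with t by ring. ring.
Qed.

Lemma frac01 p q : 0 < p -> p < q -> 0 < p / q < 1.
Proof.
  intros Hp Hq. split.
  - apply Rdiv_lt_0_compat; lra.
  - apply (Rmult_lt_reg_r q); [lra|]. field_simplify; lra.
Qed.

Lemma ln_div' p q : 0 < p -> 0 < q -> ln (p / q) = ln p - ln q.
Proof. intros. unfold Rdiv. rewrite ln_mult, ln_Rinv; try lra. apply Rinv_0_lt_compat; lra. Qed.

Definition uf (y t : R) := t * (1 - y) / (1 - t * y).
Definition vf (y t : R) := y * (1 - t) / (1 - t * y).

Lemma bounds t y : 0 < t < 1 -> 0 < y < 1 ->
  0 < t * y < 1 /\ 0 < uf y t < 1 /\ 0 < vf y t < 1.
Proof.
  intros Ht Hy. split; [split; nra|]. split; apply frac01; nra.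
Qed.

Definition Gf (y t : R) := Lsm t - Lsm (t * y) - Lsm (uf y t) - Lsm (vf y t).

Lemma Gf_derive y t : 0 < y < 1 -> 0 < t < 1 -> is_derive (Gf y) t 0.
Proof.
  intros Hy Ht.
  destruct (bounds t y Ht Hy) as [Hxy [Hu Hv]].
  assert (Hd : 0 < 1 - t * y) by nra.
  set (du := (1 - y) / (1 - t * y) ^ 2).
  set (dv := - y * (1 - y) / (1 - t * y) ^ 2).
  unfold Gf.
  replace 0 with (Ld t - y * Ld (t * y) - du * Ld (uf y t) - dv * Ld (vf y t)).
  - apply @is_derive_minus; [apply @is_derive_minus; [apply @is_derive_minus|]|].
    + apply Lsm_derive, Ht.
    + apply (is_derive_comp Lsm (fun t => t * y)).
      * apply Lsm_derive; lra.
      * auto_derive; [auto|ring].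
    + apply (is_derive_comp Lsm (uf y)).
      * apply Lsm_derive; lra.
      * unfold uf, du. auto_derive; [lra|]. field. lra.
    + apply (is_derive_comp Lsm (vf y)).
      * apply Lsm_derive; lra.
      * unfold vf, dv. auto_derive; [lra|]. field. lra.
  - unfold Ld.
    replace (1 - uf y t) with ((1 - t) / (1 - t * y)) by (unfold uf; field; lra).
    replace (1 - vf y t) with ((1 - y) / (1 - t * y)) by (unfold vf; field; lra).
    unfold uf, vf.
    rewrite !ln_div' by nra.
    rewrite !ln_mult by nra.
    unfold du, dv. field. repeat split; lra.
Qed.

Lemma cont_ex f x : ex_derive f x -> continuity_pt f x.
Proof. intros H. apply continuity_pt_filterlim. apply (ex_derive_continuous f x H). Qed.

Lemma half_pow n : 0 < (/ 2) ^ (S n) <= / 2.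
Proof.
  induction n as [|n IH].
  - simpl. lra.
  - change ((/ 2) ^ (S (S n))) with (/ 2 * (/ 2) ^ (S n)). lra.
Qed.

Lemma half_lim : is_lim_seq (fun n => (/ 2) ^ (S n)) 0.
Proof.
  apply (is_lim_seq_incr_1 (fun n => (/ 2) ^ n) 0).
  apply is_lim_seq_geom. rewrite Rabs_right; lra.
Qed.

Lemma five x y : 0 < x < 1 -> 0 < y < 1 ->
  Lsm x + Lsm y = Lsm (x * y) + Lsm (uf y x) + Lsm (vf y x).
Proof.
  intros Hx Hy.
  set (tn := fun n => x * (/ 2) ^ (S n)).
  assert (Htn : forall n, 0 < tn n < 1).
  { intro n. unfold tn. pose proof (half_pow n). nra. }
  assert (Hl : is_lim_seq tn 0).
  { apply (lim_eq _ (x * 0)); [|ring]. apply is_lim_seq_mult'; [apply is_lim_seq_const|apply half_lim]. }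
  assert (Hc : is_lim_seq (fun n => Gf y (tn n)) (0 - 0 - 0 - Lsm y)).
  { unfold Gf. apply is_lim_seq_minus'; [apply is_lim_seq_minus'; [apply is_lim_seq_minus'|]|].
    - apply Lsm_lim0; auto.
    - apply (Lsm_lim0 (fun n => tn n * y)).
      + intro n. specialize (Htn n). split; nra.
      + apply (lim_eq _ (0 * y)); [|ring]. apply is_lim_seq_mult'; [auto|apply is_lim_seq_const].
    - apply (Lsm_lim0 (fun n => uf y (tn n))).
      + intro n. apply (bounds (tn n) y (Htn n) Hy).
      + apply (lim_eq _ (uf y 0)); [|unfold uf; field].
        apply is_lim_seq_continuous; auto. apply cont_ex. unfold uf. auto_derive. lra.
    - apply (is_lim_seq_continuous Lsm (fun n => vf y (tn n)) y).
      + apply Lsm_cont, Hy.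
      + apply (lim_eq _ (vf y 0)); [|unfold vf; field].
        apply is_lim_seq_continuous; auto. apply cont_ex. unfold vf. auto_derive. lra. }
  assert (Hk : forall n, Gf y (tn n) = Gf y x).
  { intro n. apply (const_on (Gf y) 0 1); auto. intros t Ht. apply Gf_derive; auto. }
  assert (Hc2 : is_lim_seq (fun n => Gf y (tn n)) (Gf y x)).
  { apply (is_lim_seq_ext (fun _ => Gf y x)); [intro n; rewrite Hk; auto|apply is_lim_seq_const]. }
  apply is_lim_seq_unique in Hc. apply is_lim_seq_unique in Hc2.
  rewrite Hc in Hc2. injection Hc2. unfold Gf. intro E. lra.
Qed.

Definition Xs (q : R) (m : nat) := q ^ m * (1 - q) / (1 - q ^ (S m)).
Definition Ys (q : R) (m : nat) := (1 - q) / (1 - q ^ (S m)).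

Lemma pow_Q q m : 0 < q < 1 -> (1 <= m)%nat -> 0 < q ^ m < 1.
Proof.
  intros Hq Hm. split; [apply pow_lt; lra|].
  apply (pow_lt_1_compat q m); [lra|lia].
Qed.

Lemma XY_bounds q m : 0 < q < 1 -> (1 <= m)%nat -> 0 < Xs q m < 1 /\ 0 < Ys q m < 1.
Proof.
  intros Hq Hm. pose proof (pow_Q q m Hq Hm) as HQ.
  unfold Xs, Ys. simpl. set (Q := q ^ m) in *.
  split; apply frac01; nra.
Qed.

Lemma step q m : 0 < q < 1 -> (1 <= m)%nat ->
  Lsm (Xs q m) + Lsm (Ys q m) = Lsm (Xs q m * Ys q m) + Lsm (Xs q (S m)) + Lsm (Ys q (S m)).
Proof.
  intros Hq Hm. destruct (XY_bounds q m Hq Hm) as [HX HY].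
  rewrite (five _ _ HX HY). f_equal; [f_equal|]; f_equal.
  - pose proof (pow_Q q m Hq Hm) as HQ.
    unfold uf, Xs, Ys in *. simpl in *. set (Q := q ^ m) in *.
    assert (1 - q * Q <> 0) by nra.
    assert (1 - q * (q * Q) <> 0) by nra.
    assert (1 - Q <> 0) by nra.
    assert ((1 - q * Q) * (1 - q * Q) - Q * (1 - q) * (1 - q) <> 0) by nra.
    field. repeat split; auto.
  - pose proof (pow_Q q m Hq Hm) as HQ.
    unfold vf, Xs, Ys in *. simpl in *. set (Q := q ^ m) in *.
    assert (1 - q * Q <> 0) by nra.
    assert (1 - q * (q * Q) <> 0) by nra.
    assert (1 - Q <> 0) by nra.
    assert ((1 - q * Q) * (1 - q * Q) - Q * (1 - q) * (1 - q) <> 0) by nra.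
    field. repeat split; auto.
Qed.

Lemma exp_INR n t : exp (INR n * t) = exp t ^ n.
Proof.
  induction n as [|n IH].
  - simpl. rewrite Rmult_0_l. apply exp_0.
  - rewrite S_INR. replace ((INR n + 1) * t) with (INR n * t + t) by ring.
    rewrite exp_plus, IH. simpl. ring.
Qed.

Lemma term_eq L j : 0 < L ->
  sinh (L / 2) ^ 2 / sinh (INR (j + 2) * L / 2) ^ 2 = Xs (exp (- L)) (S j) * Ys (exp (- L)) (S j).
Proof.
  intros HL.
  set (s := exp (L / 2)).
  assert (Hs : 1 < s).
  { unfold s. rewrite <- exp_0. apply exp_increasing. lra. }
  assert (Hq : exp (- L) = / (s * s)).
  { unfold s. rewrite <- exp_plus. rewrite <- exp_Ropp. f_equal. field. }
  assert (Hk : exp (INR (j + 2) * L / 2) = s * s ^ (S j)).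
  { replace (INR (j + 2) * L / 2) with (INR (S (S j)) * (L / 2))
      by (replace (j + 2)%nat with (S (S j)) by lia; field).
    rewrite exp_INR. reflexivity. }
  assert (Hk' : exp (- (INR (j + 2) * L / 2)) = / (s * s ^ (S j))).
  { rewrite exp_Ropp, Hk. reflexivity. }
  assert (Hs' : exp (- (L / 2)) = / s) by (rewrite exp_Ropp; reflexivity).
  unfold sinh. rewrite Hk, Hk', Hs'. fold s.
  unfold Xs, Ys. rewrite Hq. rewrite !pow_inv, !Rpow_mult_distr.
  change (s ^ S (S j)) with (s * s ^ S j).
  set (p := s ^ S j).
  assert (Hp : 1 <= p) by (apply pow_R1_Rle; lra).
  assert (1 <= s * p) by nra.
  assert (1 < s * p * (s * p)) by nra.
  assert (1 < s * s * (p * p)) by nra.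
  assert (1 < s * s * (s * p * (s * p))) by nra.
  field. repeat split; lra.
Qed.

Theorem theorem1 (L : R) (hL : 0 < L) :
  Un_cv
    (fun n => sum_f_R0
       (fun j => Rogers (sinh (L / 2) ^ 2 / sinh (INR (j + 2) * L / 2) ^ 2)) n)
    (Rogers (exp (- L))).
Proof.
  set (q := exp (- L)).
  assert (Hq : 0 < q < 1).
  { unfold q. split; [apply exp_pos|]. rewrite <- exp_0. apply exp_increasing. lra. }
  assert (Hsum : forall n, sum_f_R0
       (fun j => Rogers (sinh (L / 2) ^ 2 / sinh (INR (j + 2) * L / 2) ^ 2)) n
      = Lsm (Xs q 1) + Lsm (Ys q 1) - (Lsm (Xs q (S (S n))) + Lsm (Ys q (S (S n))))).
  { assert (Ht : forall j, Rogers (sinh (L / 2) ^ 2 / sinh (INR (j + 2) * L / 2) ^ 2)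
                  = Lsm (Xs q (S j) * Ys q (S j))).
    { intro j. rewrite term_eq by lra. fold q. apply Rogers_Lsm.
      destruct (XY_bounds q (S j) Hq) as [HX HY]; [lia|]. split; nra. }
    intro n. rewrite (sum_eq _ (fun j => Lsm (Xs q (S j) * Ys q (S j)))) by (intros; apply Ht).
    induction n as [|n IH].
    - simpl. rewrite (step q 1) by (auto; lia). ring.
    - simpl sum_f_R0. rewrite IH. rewrite (step q (S (S n))) by (auto; lia). ring. }
  assert (Hbase : Lsm (Xs q 1) + Lsm (Ys q 1) = Lsm q + Lsm (1 - q)).
  { replace (Ys q 1) with (1 - Xs q 1).
    - apply refl; auto. destruct (XY_bounds q 1 Hq) as [HX HY]; auto.
    - unfold Xs, Ys. simpl. field. nra. }
  assert (HQ : is_lim_seq (fun n => q ^ (S (S n))) 0).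
  { apply (is_lim_seq_incr_1 (fun n => q ^ (S n)) 0).
    apply (is_lim_seq_incr_1 (fun n => q ^ n) 0).
    apply is_lim_seq_geom. rewrite Rabs_right; lra. }
  assert (HX : is_lim_seq (fun n => Lsm (Xs q (S (S n)))) 0).
  { apply Lsm_lim0.
    - intro n. apply XY_bounds; auto; lia.
    - apply (is_lim_seq_ext (fun n => (fun Q => Q * (1 - q) / (1 - q * Q)) (q ^ (S (S n))))).
      + intro n. unfold Xs. reflexivity.
      + apply (lim_eq _ ((fun Q => Q * (1 - q) / (1 - q * Q)) 0)).
        * apply (is_lim_seq_continuous (fun Q => Q * (1 - q) / (1 - q * Q)) (fun n => q ^ (S (S n))) 0); auto. apply cont_ex. auto_derive. lra.
        * field. }
  assert (HY : is_lim_seq (fun n => Lsm (Ys q (S (S n)))) (Lsm (1 - q))).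
  { apply (is_lim_seq_continuous Lsm (fun n => Ys q (S (S n))) (1 - q)).
    - apply Lsm_cont. lra.
    - apply (is_lim_seq_ext (fun n => (fun Q => (1 - q) / (1 - q * Q)) (q ^ (S (S n))))).
      + intro n. unfold Ys. reflexivity.
      + apply (lim_eq _ ((fun Q => (1 - q) / (1 - q * Q)) 0)).
        * apply (is_lim_seq_continuous (fun Q => (1 - q) / (1 - q * Q)) (fun n => q ^ (S (S n))) 0); auto. apply cont_ex. auto_derive. lra.
        * field. }
  apply is_lim_seq_Reals.
  apply (is_lim_seq_ext (fun n => Lsm (Xs q 1) + Lsm (Ys q 1) - (Lsm (Xs q (S (S n))) + Lsm (Ys q (S (S n)))))).
  { intro n. symmetry. apply Hsum. }
  apply (lim_eq _ (Lsm (Xs q 1) + Lsm (Ys q 1) - (0 + Lsm (1 - q)))).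
  - apply is_lim_seq_minus'; [apply is_lim_seq_const|]. apply is_lim_seq_plus'; auto.
  - rewrite Hbase, Rogers_Lsm by lra. ring.
Qed.
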